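(* Let $X$ be a finite $T_0$ space and $Y=X\circledast\mathbb{S}^0$ its non-Hausdorff suspension. Then $\mathrm{TC}(Y)=1$ if $X$ is contractible, and $\mathrm{TC}(Y)=4$ if $X$ is not contractible.
   Context: Finite $T_0$ spaces are identified with finite posets ($x^\downarrow=\{y:y\le x\}$ is the minimal open neighborhood of $x$; open sets are the down-closed sets). The non-Hausdorff join $A\circledast B$ of finite $T_0$ spaces $A,B$ is the disjoint union $A\sqcup B$ with the orders of $A$ and $B$ kept and additionally $a\le b$ for all $a\in A$, $b\in B$. $\mathbb{S}^0=\{x_0,y_0\}$ is the two-point discrete space, and $X\circledast\mathbb{S}^0$ is the non-Hausdorff suspension. Topological complexity is unreduced: for path-connected $Y$, with $\pi:Y^I\to Y\times Y$, $\gamma\mapsto(\gamma(0),\gamma(1))$ ($Y^I$ with compact-open topology), $\mathrm{TC}(Y)$ is the minimal $k$ such that $Y\times Y$ is covered by $k$ open sets each admitting a continuous section of $\pi$. *)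

(* Defs.v *)
From Stdlib Require Import Reals List.
Open Scope R_scope.

Definition opens (T : Type) := (T -> Prop) -> Prop.

Definition continuous {A B : Type} (oA : opens A) (oB : opens B) (f : A -> B) :=
  forall V, oB V -> oA (fun a => V (f a)).

Definition prod_open {A B : Type} (oA : opens A) (oB : opens B) : opens (A * B) :=
  fun W => forall p, W p -> exists U V, oA U /\ oB V /\ U (fst p) /\ V (snd p) /\
                          (forall a b, U a -> V b -> W (a, b)).

Definition sub_open {A : Type} (oA : opens A) (P : A -> Prop) : opens {a | P a} :=
  fun W => exists U, oA U /\ forall x, W x <-> U (proj1_sig x).

(** Topology generated by a subbasis S (finite intersections of members of S,
    the empty intersection being the whole space, then arbitrary unions). *)
Definition generated_open {A : Type} (S : (A -> Prop) -> Prop) : opens A :=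
  fun W => forall a, W a -> exists l : list (A -> Prop),
      (forall B, In B l -> S B) /\ (forall B, In B l -> B a) /\
      (forall x, (forall B, In B l -> B x) -> W x).

Definition compact {A : Type} (oA : opens A) (K : A -> Prop) :=
  forall F : (A -> Prop) -> Prop,
    (forall U, F U -> oA U) ->
    (forall a, K a -> exists U, F U /\ U a) ->
    exists l : list (A -> Prop), (forall U, In U l -> F U) /\
      (forall a, K a -> exists U, In U l /\ U a).

Definition R_open : opens R :=
  fun U => forall x, U x -> exists eps, 0 < eps /\ forall y, Rabs (y - x) < eps -> U y.

Definition unitI := {t : R | 0 <= t <= 1}.
Definition I_open : opens unitI := sub_open R_open (fun t => 0 <= t <= 1).
Definition I0 : unitI := exist _ 0 (conj (Rle_refl 0) Rle_0_1).
Definition I1 : unitI := exist _ 1 (conj Rle_0_1 (Rle_refl 1)).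

Definition cmap {A B : Type} (oA : opens A) (oB : opens B) :=
  {f : A -> B | continuous oA oB f}.

Definition compact_open {A B : Type} (oA : opens A) (oB : opens B) : opens (cmap oA oB) :=
  generated_open (fun W => exists K U, compact oA K /\ oB U /\
                     forall f : cmap oA oB, W f <-> forall a, K a -> U (proj1_sig f a)).

(** Finite T0 spaces = finite posets: open sets are the down-closed sets. *)
Definition alex_open {X : Type} (le : X -> X -> Prop) : opens X :=
  fun U => forall x y, U x -> le y x -> U y.

(** Non-Hausdorff suspension X ⊛ S^0 = X ⊔ {x0, y0}, with a <= pole for all a. *)
Inductive susp (X : Type) : Type :=
| base : X -> susp X
| pole : bool -> susp X.
Arguments base {X} _.
Arguments pole {X} _.

Definition susp_le {X : Type} (le : X -> X -> Prop) (u v : susp X) : Prop :=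
  match u, v with
  | base a, base b => le a b
  | base _, pole _ => True
  | pole b, pole c => b = c
  | pole _, base _ => False
  end.

Definition contractible {X : Type} (oX : opens X) : Prop :=
  exists (x0 : X) (H : X * unitI -> X),
    continuous (prod_open oX I_open) oX H /\
    forall x, H (x, I0) = x /\ H (x, I1) = x0.

(** Topological complexity (unreduced). *)
Section TC.
Context {Y : Type} (oY : opens Y).

Definition path_space := cmap I_open oY.
Definition path_open : opens path_space := compact_open I_open oY.
Definition endpoints (g : path_space) : Y * Y := (proj1_sig g I0, proj1_sig g I1).

Definition has_section (U : Y * Y -> Prop) : Prop :=
  exists s : {p | U p} -> path_space,
    continuous (sub_open (prod_open oY oY) U) path_open s /\
    forall p, endpoints (s p) = proj1_sig p.

Definition TC_cover (k : nat) : Prop :=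
  exists Us : nat -> (Y * Y -> Prop),
    (forall i, (i < k)%nat -> prod_open oY oY (Us i) /\ has_section (Us i)) /\
    (forall p, exists i, (i < k)%nat /\ Us i p).

Definition TC_eq (n : nat) : Prop :=
  TC_cover n /\ forall k, TC_cover k -> (n <= k)%nat.
End TC.

(* Main.v *)
Require Import Defs.
From Stdlib Require Import Reals List Lra Lia ClassicalEpsilon ProofIrrelevance Classical.
Open Scope R_scope.

Lemma abs_lt_intro x y e : x - y < e -> y - x < e -> Rabs (x - y) < e.
Proof. intros; apply Rabs_def1; lra. Qed.
Lemma abs_lt_elim x y e : Rabs (x - y) < e -> x - y < e /\ y - x < e.
Proof. intros H; apply Rabs_def2 in H; lra. Qed.

Section Paths.
Variable T : Type.
Variable le : T -> T -> Prop.
Hypothesis lrefl : forall x, le x x.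
Hypothesis ltrans : forall x y z, le x y -> le y z -> le x z.

Definition pgood (g : R -> T) := forall t, 0 <= t <= 1 -> exists e, 0 < e /\
  forall t', 0 <= t' <= 1 -> Rabs (t' - t) < e -> le (g t') (g t).

Definition fgood {Z : Type} (leZ : Z -> Z -> Prop) (D : Z -> Prop) (g : Z -> R -> T) :=
  (forall z, D z -> pgood (g z)) /\
  (forall z z', D z -> D z' -> leZ z z' -> forall t, 0 <= t <= 1 -> le (g z t) (g z' t)).

Definition pcat (g1 g2 : R -> T) (t : R) : T :=
  if Rlt_dec t (/2) then g1 (2*t) else if Rlt_dec (/2) t then g2 (2*t-1) else g1 1.

Lemma pgood_cat g1 g2 : pgood g1 -> pgood g2 -> g1 1 = g2 0 -> pgood (pcat g1 g2).
Proof.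
  intros H1 H2 E t Ht. unfold pcat. destruct (Rlt_dec t (/2)).
  - destruct (H1 (2*t)) as [e [He Hl]]; [lra|].
    exists (Rmin (e/2) (/2 - t)). split. apply Rmin_glb_lt; lra.
    intros t' Ht' Ha.
    assert (Rmin (e/2) (/2-t) <= e/2) by apply Rmin_l.
    assert (Rmin (e/2) (/2-t) <= /2 - t) by apply Rmin_r.
    apply abs_lt_elim in Ha. destruct (Rlt_dec t' (/2)); [|lra].
    apply Hl; [lra|]. apply abs_lt_intro; lra.
  - destruct (Rlt_dec (/2) t).
    + destruct (H2 (2*t-1)) as [e [He Hl]]; [lra|].
      exists (Rmin (e/2) (t - /2)). split. apply Rmin_glb_lt; lra.
      intros t' Ht' Ha.
      assert (Rmin (e/2) (t - /2) <= e/2) by apply Rmin_l.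
      assert (Rmin (e/2) (t - /2) <= t - /2) by apply Rmin_r.
      apply abs_lt_elim in Ha. destruct (Rlt_dec t' (/2)); [lra|].
      destruct (Rlt_dec (/2) t'); [|lra].
      apply Hl; [lra|]. apply abs_lt_intro; lra.
    + destruct (H1 1) as [e1 [He1 Hl1]]; [lra|].
      destruct (H2 0) as [e2 [He2 Hl2]]; [lra|].
      exists (Rmin (e1/2) (e2/2)). split. apply Rmin_glb_lt; lra.
      intros t' Ht' Ha.
      assert (Rmin (e1/2) (e2/2) <= e1/2) by apply Rmin_l.
      assert (Rmin (e1/2) (e2/2) <= e2/2) by apply Rmin_r.
      apply abs_lt_elim in Ha.
      destruct (Rlt_dec t' (/2)).
      * apply Hl1; [lra|]. apply abs_lt_intro; lra.
      * destruct (Rlt_dec (/2) t').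
        -- rewrite E. apply Hl2; [lra|]. apply abs_lt_intro; lra.
        -- apply lrefl.
Qed.

Lemma fgood_cat {Z} (leZ : Z -> Z -> Prop) D g1 g2 :
  fgood leZ D g1 -> fgood leZ D g2 -> (forall z, D z -> g1 z 1 = g2 z 0) ->
  fgood leZ D (fun z => pcat (g1 z) (g2 z)).
Proof.
  intros [P1 M1] [P2 M2] E. split.
  - intros z Hz. apply pgood_cat; auto.
  - intros z z' Hz Hz' Hzz t Ht. unfold pcat.
    destruct (Rlt_dec t (/2)). apply M1; auto; lra.
    destruct (Rlt_dec (/2) t). apply M2; auto; lra. apply M1; auto; lra.
Qed.

Definition prev (g : R -> T) (t : R) : T := g (1 - t).

Lemma fgood_rev {Z} (leZ : Z -> Z -> Prop) D g :
  fgood leZ D g -> fgood leZ D (fun z => prev (g z)).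
Proof.
  intros [P M]. split.
  - intros z Hz t Ht. destruct (P z Hz (1-t)) as [e [He Hl]]; [lra|].
    exists e. split; auto. intros t' Ht' Ha. unfold prev. apply Hl; [lra|].
    apply abs_lt_elim in Ha. apply abs_lt_intro; lra.
  - intros z z' Hz Hz' Hzz t Ht. unfold prev. apply M; auto; lra.
Qed.

Definition pup (a b : T) (t : R) : T := if Rlt_dec t 1 then a else b.
Definition pdown (a b : T) (t : R) : T := if Rlt_dec 0 t then b else a.

Lemma fgood_up {Z} (leZ : Z -> Z -> Prop) D (a b : Z -> T) :
  (forall z, D z -> le (a z) (b z)) ->
  (forall z z', D z -> D z' -> leZ z z' -> le (a z) (a z') /\ le (b z) (b z')) ->
  fgood leZ D (fun z => pup (a z) (b z)).
Proof.
  intros Hab M. split.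
  - intros z Hz t Ht. unfold pup. destruct (Rlt_dec t 1).
    + exists (1 - t). split. lra. intros t' Ht' Ha. apply abs_lt_elim in Ha.
      destruct (Rlt_dec t' 1); [apply lrefl|lra].
    + exists 1. split. lra. intros t' _ _. destruct (Rlt_dec t' 1); auto.
  - intros z z' Hz Hz' Hzz t Ht. unfold pup. destruct (M z z' Hz Hz' Hzz).
    destruct (Rlt_dec t 1); auto.
Qed.

Lemma fgood_down {Z} (leZ : Z -> Z -> Prop) D (a b : Z -> T) :
  (forall z, D z -> le (b z) (a z)) ->
  (forall z z', D z -> D z' -> leZ z z' -> le (a z) (a z') /\ le (b z) (b z')) ->
  fgood leZ D (fun z => pdown (a z) (b z)).
Proof.
  intros Hab M. split.
  - intros z Hz t Ht. unfold pdown. destruct (Rlt_dec 0 t).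
    + exists t. split. lra. intros t' Ht' Ha. apply abs_lt_elim in Ha.
      destruct (Rlt_dec 0 t'); [apply lrefl|lra].
    + exists 1. split. lra. intros t' _ _. destruct (Rlt_dec 0 t'); auto.
  - intros z z' Hz Hz' Hzz t Ht. unfold pdown. destruct (M z z' Hz Hz' Hzz).
    destruct (Rlt_dec 0 t); auto.
Qed.

Lemma fgood_comp {Z Z'} (leZ : Z -> Z -> Prop) (leZ' : Z' -> Z' -> Prop) D D' g (f : Z' -> Z) :
  fgood leZ D g -> (forall z, D' z -> D (f z)) ->
  (forall z z', D' z -> D' z' -> leZ' z z' -> leZ (f z) (f z')) ->
  fgood leZ' D' (fun z => g (f z)).
Proof.
  intros [P M] HD Hf. split; intros; auto.
Qed.

Lemma pcat0 g1 g2 : pcat g1 g2 0 = g1 0.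
Proof. unfold pcat. destruct (Rlt_dec 0 (/2)); [|lra]. f_equal; ring. Qed.
Lemma pcat1 g1 g2 : pcat g1 g2 1 = g2 1.
Proof. unfold pcat. destruct (Rlt_dec 1 (/2)); [lra|].
  destruct (Rlt_dec (/2) 1); [|lra]. f_equal; ring. Qed.
Lemma prev0 g : prev g 0 = g 1. Proof. unfold prev; f_equal; ring. Qed.
Lemma prev1 g : prev g 1 = g 0. Proof. unfold prev; f_equal; ring. Qed.
Lemma pup0 a b : pup a b 0 = a. Proof. unfold pup; destruct (Rlt_dec 0 1); auto; lra. Qed.
Lemma pup1 a b : pup a b 1 = b. Proof. unfold pup; destruct (Rlt_dec 1 1); auto; lra. Qed.
Lemma pdown0 a b : pdown a b 0 = a. Proof. unfold pdown; destruct (Rlt_dec 0 0); auto; lra. Qed.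
Lemma pdown1 a b : pdown a b 1 = b. Proof. unfold pdown; destruct (Rlt_dec 0 1); auto; lra. Qed.

End Paths.
Arguments pgood {T} le g.
Arguments fgood {T} le {Z} leZ D g.
Arguments pcat {T} g1 g2 t.
Arguments prev {T} g t.
Arguments pup {T} a b t.
Arguments pdown {T} a b t.
Open Scope R_scope.

Definition clamp (r : R) : unitI :=
  match Rle_dec 0 r with
  | left h1 => match Rle_dec r 1 with
               | left h2 => exist _ r (conj h1 h2)
               | right _ => I1 end
  | right _ => I0 end.

Lemma clamp_val r : 0 <= r <= 1 -> proj1_sig (clamp r) = r.
Proof. intros [h1 h2]. unfold clamp. destruct (Rle_dec 0 r); [|exfalso; lra].
  destruct (Rle_dec r 1); [|lra]. reflexivity. Qed.

Lemma clamp_id (t : unitI) : clamp (proj1_sig t) = t.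
Proof. destruct t as [r [h1 h2]]. unfold clamp. simpl. destruct (Rle_dec 0 r); [|exfalso; lra].
  destruct (Rle_dec r 1); [|exfalso; lra]. f_equal. apply proof_irrelevance. Qed.

Lemma clamp0 : clamp 0 = I0. Proof. pose proof (clamp_id I0) as H; simpl in H; exact H. Qed.
Lemma clamp1 : clamp 1 = I1. Proof. pose proof (clamp_id I1) as H; simpl in H; exact H. Qed.

Lemma ball_open (t0 e : R) : R_open (fun r => Rabs (r - t0) < e).
Proof.
  intros r Hr. exists (e - Rabs (r - t0)). split. lra.
  intros y Hy. pose proof (Rabs_triang (y - r) (r - t0)).
  replace (y - t0) with ((y - r) + (r - t0)) by ring. lra.
Qed.

Section Top.
Variable T : Type.
Variable le : T -> T -> Prop.
Hypothesis lrefl : forall x, le x x.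
Hypothesis ltrans : forall x y z, le x y -> le y z -> le x z.

Lemma alex_down a : alex_open le (fun x => le x a).
Proof. intros x y Hx Hyx; eapply ltrans; eauto. Qed.

Lemma pgood_cont g : pgood le g -> continuous I_open (alex_open le) (fun t => g (proj1_sig t)).
Proof.
  intros Hg V HV. unfold I_open, sub_open.
  exists (fun r => exists e, 0 < e /\ forall r', 0 <= r' <= 1 -> Rabs (r' - r) < e -> V (g r')).
  split.
  - intros x [e [He Hx]]. exists (e/2). split. lra. intros y Hy. exists (e/2). split. lra.
    intros r' Hr' Ha. apply Hx; auto. apply abs_lt_elim in Hy. apply abs_lt_elim in Ha.
    apply abs_lt_intro; lra.
  - intros [r Hr]. simpl. split.
    + intros HVr. destruct (Hg r Hr) as [e [He Hl]]. exists e. split; auto.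
      intros r' Hr' Ha. eapply HV; [exact HVr| apply Hl; auto].
    + intros [e [He Hx]]. apply Hx; auto. replace (r - r) with 0 by ring. rewrite Rabs_R0; lra.
Qed.

Lemma cont_pgood (g : unitI -> T) : continuous I_open (alex_open le) g -> pgood le (fun r => g (clamp r)).
Proof.
  intros Hc t Ht. destruct (Hc _ (alex_down (g (clamp t)))) as [R' [HR' Hiff]].
  assert (HRt : R' t). { rewrite <- (clamp_val t Ht). apply Hiff. apply lrefl. }
  destruct (HR' t HRt) as [e [He Hl]]. exists e. split; auto.
  intros t' Ht' Ha. apply Hiff. rewrite (clamp_val t' Ht'). apply Hl; auto.
Qed.

Definition leP (p q : T * T) := le (fst p) (fst q) /\ le (snd p) (snd q).

Lemma sec_of_family (U : T * T -> Prop) (g : T * T -> R -> T) :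
  fgood le leP U g -> (forall p, U p -> g p 0 = fst p /\ g p 1 = snd p) ->
  has_section (alex_open le) U.
Proof.
  intros [Pg Mg] E.
  exists (fun x => exist (fun f => continuous I_open (alex_open le) f)
           (fun t => g (proj1_sig x) (proj1_sig t)) (pgood_cont _ (Pg _ (proj2_sig x)))).
  split.
  - intros W HW. unfold sub_open.
    exists (fun z => exists q : {p | U p}, leP z (proj1_sig q) /\
       W (exist (fun f => continuous I_open (alex_open le) f)
           (fun t => g (proj1_sig q) (proj1_sig t)) (pgood_cont _ (Pg _ (proj2_sig q))))).
    split.
    + intros p [q [Hpq Hq]]. exists (fun a => le a (fst p)), (fun b => le b (snd p)).
      split; [apply alex_down|]. split; [apply alex_down|]. split; [apply lrefl|].
      split; [apply lrefl|]. intros a b Ha Hb. exists q. split; [|exact Hq].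
      destruct Hpq; split; simpl; eauto.
    + intros x. split.
      * intros Hx. exists x. split; [split; apply lrefl | exact Hx].
      * intros [q [Hxq Hq]]. destruct (HW _ Hq) as [l [Hl1 [Hl2 Hl3]]]. apply Hl3.
        intros B HB. destruct (Hl1 B HB) as [K [V [HK [HV Hiff]]]]. apply Hiff.
        intros a Ha. pose proof (proj1 (Hiff _) (Hl2 B HB) a Ha) as HVa. simpl in HVa |- *.
        eapply HV; [exact HVa|]. apply Mg; auto. apply proj2_sig. apply proj2_sig.
        apply proj2_sig.
  - intros p. unfold endpoints. simpl. destruct (E _ (proj2_sig p)) as [E0 E1].
    transitivity (fst (proj1_sig p), snd (proj1_sig p)); [f_equal; [exact E0|exact E1]|]. destruct (proj1_sig p); reflexivity.
Qed.

Lemma sec_mono U (s : {p | U p} -> path_space (alex_open le)) :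
  continuous (sub_open (prod_open (alex_open le) (alex_open le)) U) (path_open (alex_open le)) s ->
  forall p q, leP (proj1_sig p) (proj1_sig q) -> forall t, le (proj1_sig (s p) t) (proj1_sig (s q) t).
Proof.
  intros Hs p q Hpq t.
  set (V := fun y => le y (proj1_sig (s q) t)).
  set (W := fun f : path_space (alex_open le) => forall a, a = t -> V (proj1_sig f a)).
  assert (HW : path_open (alex_open le) W).
  { unfold path_open, compact_open, generated_open. intros f Hf. exists (W :: nil).
    split; [|split].
    - intros B [<-|[]]. exists (fun a => a = t), V. split; [|split].
      + intros F HF Hcov. destruct (Hcov t eq_refl) as [U0 [HU0 HU0t]].
        exists (U0 :: nil). split. intros U1 [<-|[]]; auto.
        intros a ->. exists U0; split; [left; auto| auto].
      + apply alex_down.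
      + intros f0; split; auto.
    - intros B [<-|[]]; auto.
    - intros x Hx; apply Hx; left; auto. }
  destruct (Hs W HW) as [O [HO Hiff]].
  assert (HOq : O (proj1_sig q)) by (apply Hiff; intros a ->; unfold V; apply lrefl).
  destruct (HO _ HOq) as [U1 [V1 [HU1 [HV1 [Hu [Hv Hbox]]]]]].
  assert (HOp : O (proj1_sig p)).
  { rewrite (surjective_pairing (proj1_sig p)). apply Hbox.
    exact (HU1 _ _ Hu (proj1 Hpq)). exact (HV1 _ _ Hv (proj2 Hpq)). }
  apply Hiff in HOp. apply HOp. reflexivity.
Qed.

Lemma sec_family (U : T * T -> Prop) (u v : T -> T) :
  has_section (alex_open le) U -> (forall y, U (u y, v y)) ->
  (forall y y', le y y' -> le (u y) (u y') /\ le (v y) (v y')) ->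
  exists K : T -> R -> T, fgood le le (fun _ => True) K /\
     forall y, K y 0 = u y /\ K y 1 = v y.
Proof.
  intros [s [Hs Hend]] HU Huv.
  exists (fun y r => proj1_sig (s (exist _ (u y, v y) (HU y))) (clamp r)).
  split; [split|].
  - intros y _. apply cont_pgood. apply proj2_sig.
  - intros y y' _ _ Hyy t Ht. apply (sec_mono _ s Hs). simpl. apply Huv; auto.
  - intros y. rewrite clamp0, clamp1. pose proof (Hend (exist _ (u y, v y) (HU y))) as He.
    unfold endpoints in He. simpl in He. injection He. auto.
Qed.

Lemma contr_family (H : T * unitI -> T) :
  continuous (prod_open (alex_open le) I_open) (alex_open le) H ->
  fgood le le (fun _ => True) (fun a r => H (a, clamp r)).
Proof.
  intros Hc. split.
  - intros a _ t Ht.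
    destruct (Hc _ (alex_down (H (a, clamp t))) (a, clamp t) (lrefl _))
      as [U1 [V1 [HU1 [[R' [HR' Hiff]] [Ha [Ht1 Hbox]]]]]].
    simpl in *. apply Hiff in Ht1. rewrite (clamp_val t Ht) in Ht1.
    destruct (HR' t Ht1) as [e [He Hl]]. exists e. split; auto.
    intros t' Ht' Hd. apply (Hbox a (clamp t') Ha). apply Hiff. rewrite (clamp_val t' Ht').
    apply Hl; auto.
  - intros a a' _ _ Haa t Ht.
    destruct (Hc _ (alex_down (H (a', clamp t))) (a', clamp t) (lrefl _))
      as [U1 [V1 [HU1 [HV1 [Ha [Ht1 Hbox]]]]]].
    simpl in *. apply (Hbox a (clamp t)); auto. exact (HU1 _ _ Ha Haa).
Qed.

Lemma fam_cont (Hf : T -> R -> T) : fgood le le (fun _ => True) Hf ->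
  continuous (prod_open (alex_open le) I_open) (alex_open le) (fun p => Hf (fst p) (proj1_sig (snd p))).
Proof.
  intros [P M] V HV [x t] Hxt. simpl in Hxt.
  destruct (P x I (proj1_sig t) (proj2_sig t)) as [e [He Hl]].
  exists (fun x' => le x' x), (fun t' : unitI => Rabs (proj1_sig t' - proj1_sig t) < e).
  split; [apply alex_down|]. split.
  - exists (fun r => Rabs (r - proj1_sig t) < e). split. apply ball_open. intros; tauto.
  - split; [apply lrefl|]. split.
    + simpl. replace (proj1_sig t - proj1_sig t) with 0 by ring. rewrite Rabs_R0; lra.
    + intros a b Ha Hb. simpl. eapply HV; [exact Hxt|]. eapply ltrans.
      * apply (M a x I I Ha). apply proj2_sig.
      * apply Hl; auto. apply proj2_sig.
Qed.

End Top.
Open Scope R_scope.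

Lemma max_exists {T} (Rl : T -> T -> Prop)
  (Rt : forall x y z, Rl x y -> Rl y z -> Rl x z)
  (Ra : forall x y, Rl x y -> Rl y x -> x = y) :
  forall l (P : T -> Prop), (forall x, P x -> In x l) -> (exists x, P x) ->
  exists x, P x /\ forall y, P y -> Rl x y -> y = x.
Proof.
  induction l as [|a l IH]; intros P HP [x0 Hx0].
  - destruct (HP x0 Hx0).
  - destruct (classic (exists x, P x /\ x <> a)) as [Hex|Hno].
    + destruct (IH (fun x => P x /\ x <> a)) as [m [[Pm Hma] Hmax]].
      { intros x [Px Hxa]. destruct (HP x Px); [congruence|auto]. }
      { exact Hex. }
      destruct (classic (P a /\ Rl m a)) as [[Pa Rma]|Hn].
      * exists a. split; [exact Pa|]. intros y Py Ray.
        destruct (classic (y = a)) as [|Hya]; auto. exfalso.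
        assert (y = m) by (apply Hmax; [split; auto| eapply Rt; eauto]). subst y.
        apply Hma. apply Ra; auto.
      * exists m. split; auto. intros y Py Rmy. destruct (classic (y = a)) as [->|Hya].
        -- exfalso; apply Hn; auto.
        -- apply Hmax; auto.
    + exists x0. split; auto. intros y Py _.
      assert (y = a) by (apply NNPP; intro; apply Hno; eauto).
      assert (x0 = a) by (apply NNPP; intro; apply Hno; eauto). congruence.
Qed.

Lemma list_min {A} (Q : A -> R -> Prop) (l : list A) :
  (forall a e e', Q a e -> 0 < e' <= e -> Q a e') ->
  (forall a, In a l -> exists e, 0 < e /\ Q a e) ->
  exists e, 0 < e /\ forall a, In a l -> Q a e.
Proof.
  intros Hmon. induction l as [|a l IH]; intros H.
  - exists 1. split. lra. intros a [].
  - destruct (H a (or_introl eq_refl)) as [e1 [He1 Q1]].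
    destruct IH as [e2 [He2 Q2]]. { intros b Hb; apply H; right; auto. }
    exists (Rmin e1 e2). assert (Rmin e1 e2 <= e1) by apply Rmin_l.
    assert (Rmin e1 e2 <= e2) by apply Rmin_r.
    assert (0 < Rmin e1 e2) by (apply Rmin_glb_lt; auto). split; auto.
    intros b [<-|Hb]. apply (Hmon _ e1); auto. apply (Hmon _ e2); auto.
Qed.

Section Fence.
Variable T : Type.
Variable le : T -> T -> Prop.
Hypothesis lrefl : forall x, le x x.
Hypothesis ltrans : forall x y z, le x y -> le y z -> le x z.
Hypothesis lanti : forall x y, le x y -> le y x -> x = y.

Definition mono2 (S S' : T -> Prop) (f : T -> T) :=
  (forall x, S x -> S' (f x)) /\ (forall x y, S x -> S y -> le x y -> le (f x) (f y)).
Definition cmp (S : T -> Prop) (f g : T -> T) :=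
  (forall x, S x -> le (f x) (g x)) \/ (forall x, S x -> le (g x) (f x)).

Inductive fence (S : T -> Prop) : (T -> T) -> (T -> T) -> Prop :=
| fence_refl f g : mono2 S S f -> (forall x, S x -> f x = g x) -> fence S f g
| fence_step f h g : mono2 S S f -> cmp S f h -> fence S h g -> fence S f g.

Definition FC S := exists c, S c /\ fence S (fun x => x) (fun _ => c).

Lemma mono2_id S S' : (forall x, S x -> S' x) -> mono2 S S' (fun x => x).
Proof. split; auto. Qed.
Lemma mono2_const S S' c : S' c -> mono2 S S' (fun _ => c).
Proof. split; auto. Qed.
Lemma mono2_comp A B C f g : mono2 A B f -> mono2 B C g -> mono2 A C (fun x => g (f x)).
Proof. intros [F1 F2] [G1 G2]. split; auto. Qed.
Lemma mono2_ext S S' f f' : mono2 S S' f -> (forall x, S x -> f x = f' x) -> mono2 S S' f'.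
Proof. intros [F1 F2] E. split; intros; rewrite <- ?E by auto; auto. Qed.

Lemma fence_l S f g : fence S f g -> mono2 S S f.
Proof. destruct 1; auto. Qed.
Lemma fence_r S f g : fence S f g -> mono2 S S g.
Proof. induction 1; auto. eapply mono2_ext; eauto. Qed.

Lemma fence_ext S f g f' g' : fence S f g -> (forall x, S x -> f x = f' x) ->
  (forall x, S x -> g x = g' x) -> fence S f' g'.
Proof.
  intros F. revert f' g'. induction F as [f g Hm E|f h g Hm C F IH]; intros f' g' E1 E2.
  - apply fence_refl. eapply mono2_ext; eauto. intros x Sx. rewrite <- E1, <- E2 by auto. auto.
  - apply fence_step with h. eapply mono2_ext; eauto.
    destruct C as [C|C]; [left|right]; intros x Sx; rewrite <- E1 by auto; auto.
    apply IH; auto.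
Qed.

Lemma fence_trans S f g h : fence S f g -> fence S g h -> fence S f h.
Proof.
  induction 1 as [f g Hm E|f k g Hm C F IH]; intros G.
  - eapply fence_ext; eauto. intros x Sx; rewrite E; auto.
  - apply fence_step with k; auto.
Qed.

Lemma fence_snoc S f g h : fence S f g -> mono2 S S h -> cmp S g h -> fence S f h.
Proof.
  intros F Hh C. eapply fence_trans; [exact F|]. apply fence_step with h; auto.
  apply (fence_r _ _ _ F). apply fence_refl; auto.
Qed.

Lemma fence_sym S f g : fence S f g -> fence S g f.
Proof.
  induction 1 as [f g Hm E|f h g Hm C F IH].
  - apply fence_refl. eapply mono2_ext; eauto. intros; symmetry; auto.
  - eapply fence_trans; [exact IH|]. apply fence_step with f; auto.
    apply (fence_l _ _ _ F). destruct C; [right|left]; auto. apply fence_refl; auto.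
Qed.

Lemma fence_map S S' phi psi f g : fence S f g -> mono2 S S' phi -> mono2 S' S psi ->
  fence S' (fun x => phi (f (psi x))) (fun x => phi (g (psi x))).
Proof.
  intros F Hphi Hpsi. induction F as [f g Hm E|f h g Hm C F IH].
  - apply fence_refl. eapply mono2_comp; [eapply mono2_comp; eauto|eauto].
    intros x Sx. rewrite E; auto. apply Hpsi; auto.
  - apply fence_step with (fun x => phi (h (psi x))); auto.
    eapply mono2_comp; [eapply mono2_comp; eauto|eauto].
    pose proof (fence_l _ _ _ F) as [Hh1 _]. destruct Hm as [Hm1 _].
    destruct Hpsi as [Hp1 _]. destruct Hphi as [_ Hf2].
    destruct C as [C|C]; [left|right]; intros x Sx; apply Hf2; auto.
Qed.

Lemma mono2_Sext S S' f : (forall x, S x <-> S' x) -> mono2 S S f -> mono2 S' S' f.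
Proof. intros HS [M1 M2]. split. intros x Hx. apply HS, M1, HS, Hx.
  intros x y Hx Hy Hxy. apply M2; try apply HS; auto. Qed.

Lemma fence_Sext S S' f g : (forall x, S x <-> S' x) -> fence S f g -> fence S' f g.
Proof.
  intros HS. induction 1 as [f g Hm E|f h g Hm C F IH].
  - apply fence_refl. eapply mono2_Sext; eauto. intros x Hx; apply E, HS, Hx.
  - apply fence_step with h; auto. eapply mono2_Sext; eauto.
    destruct C as [C|C]; [left|right]; intros x Hx; apply C, HS, Hx.
Qed.

Lemma FC_ext S S' : (forall x, S x <-> S' x) -> FC S -> FC S'.
Proof. intros HS [c [Sc F]]. exists c. split. apply HS; auto. eapply fence_Sext; eauto. Qed.

Definition upbeat (S : T -> Prop) b := S b /\ exists m, S m /\ m <> b /\ le b m /\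
  forall z, S z -> z <> b -> le b z -> le m z.
Definition downbeat (S : T -> Prop) b := S b /\ exists m, S m /\ m <> b /\ le m b /\
  forall z, S z -> z <> b -> le z b -> le z m.
Definition beat S b := upbeat S b \/ downbeat S b.
Definition rem (S : T -> Prop) b x := S x /\ x <> b.

Definition retr (b m x : T) : T := if excluded_middle_informative (x = b) then m else x.

Lemma retr_facts S b : beat S b -> exists m, mono2 S (rem S b) (retr b m) /\
  cmp S (fun x => x) (retr b m) /\ (forall x, rem S b x -> retr b m x = x).
Proof.
  intros [[Sb [m [Sm [Hmb [Hbm Hmin]]]]]|[Sb [m [Sm [Hmb [Hbm Hmax]]]]]]; exists m;
  (split; [split|split]); unfold retr.
  - intros x Sx. destruct (excluded_middle_informative (x = b)); split; auto.
  - intros x y Sx Sy Hxy.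
    destruct (excluded_middle_informative (x = b)); destruct (excluded_middle_informative (y = b));
    subst; auto; first [ apply lrefl | apply Hmin; auto | eapply ltrans; eauto ].
  - left. intros x Sx. destruct (excluded_middle_informative (x = b)); subst; auto.
  - intros x [Sx Hxb]. destruct (excluded_middle_informative (x = b)); congruence.
  - intros x Sx. destruct (excluded_middle_informative (x = b)); split; auto.
  - intros x y Sx Sy Hxy.
    destruct (excluded_middle_informative (x = b)); destruct (excluded_middle_informative (y = b));
    subst; auto; first [ apply lrefl | apply Hmax; auto | eapply ltrans; eauto ].
  - right. intros x Sx. destruct (excluded_middle_informative (x = b)); subst; auto.
  - intros x [Sx Hxb]. destruct (excluded_middle_informative (x = b)); congruence.
Qed.

Lemma FC_remove S b : beat S b -> FC S -> FC (rem S b).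
Proof.
  intros Hb [c [Sc F]]. destruct (retr_facts S b Hb) as [m [Hm [_ Hid]]].
  pose proof (fence_map S (rem S b) (retr b m) (fun x => x) _ _ F Hm
    (mono2_id _ _ (fun x H => proj1 H))) as G.
  exists (retr b m c). split. apply Hm; auto.
  eapply fence_ext; [exact G| |]; intros x Hx; simpl; auto.
Qed.

Lemma FC_add S b : beat S b -> FC (rem S b) -> FC S.
Proof.
  intros Hb [c [Sc F]]. destruct (retr_facts S b Hb) as [m [Hm [Hc Hid]]].
  pose proof (fence_map (rem S b) S (fun x => x) (retr b m) _ _ F
    (mono2_id _ _ (fun x H => proj1 H)) Hm) as G.
  exists c. split. apply Sc. apply fence_step with (retr b m).
  apply mono2_id; auto. exact Hc.
  eapply fence_ext; [exact G| |]; intros x Hx; simpl; auto.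
Qed.

Lemma stong_up S l f : (forall x, S x -> In x l) -> (forall b, ~ upbeat S b) ->
  mono2 S S f -> (forall x, S x -> le x (f x)) -> forall x, S x -> f x = x.
Proof.
  intros Hl Hnb [M1 M2] Hge. apply NNPP. intro Hn.
  assert (Hex : exists x, S x /\ f x <> x).
  { apply NNPP; intro H; apply Hn; intros x Sx; apply NNPP; intro; apply H; eauto. }
  destruct (max_exists le ltrans lanti l (fun x => S x /\ f x <> x)) as [x [[Sx Hfx] Hmax]].
  { intros x [Sx _]; auto. } { exact Hex. }
  apply (Hnb x). split; auto. exists (f x). split; auto. split; auto. split; auto.
  intros z Sz Hzx Hxz. assert (f z = z).
  { apply NNPP; intro Hfz. apply Hzx. apply Hmax; auto. }
  rewrite <- H. apply M2; auto.
Qed.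

Lemma stong_down S l f : (forall x, S x -> In x l) -> (forall b, ~ downbeat S b) ->
  mono2 S S f -> (forall x, S x -> le (f x) x) -> forall x, S x -> f x = x.
Proof.
  intros Hl Hnb [M1 M2] Hge. apply NNPP. intro Hn.
  assert (Hex : exists x, S x /\ f x <> x).
  { apply NNPP; intro H; apply Hn; intros x Sx; apply NNPP; intro; apply H; eauto. }
  destruct (max_exists (fun a b => le b a) (fun x y z H1 H2 => ltrans z y x H2 H1)
     (fun x y H1 H2 => lanti x y H2 H1) l (fun x => S x /\ f x <> x)) as [x [[Sx Hfx] Hmax]].
  { intros x [Sx _]; auto. } { exact Hex. }
  apply (Hnb x). split; auto. exists (f x). split; auto. split; auto. split; auto.
  intros z Sz Hzx Hxz. assert (f z = z).
  { apply NNPP; intro Hfz. apply Hzx. apply Hmax; auto. }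
  rewrite <- H. apply M2; auto.
Qed.

Lemma fence_id S l f g : (forall x, S x -> In x l) -> (forall b, ~ beat S b) ->
  fence S f g -> (forall x, S x -> f x = x) -> forall x, S x -> g x = x.
Proof.
  intros Hl Hnb. induction 1 as [f g Hm E|f h g Hm C F IH]; intros Hf.
  - intros x Sx. rewrite <- E; auto.
  - apply IH. pose proof (fence_l _ _ _ F) as Hh. destruct C as [C|C].
    + apply (stong_up S l); auto. intros b Hb; apply (Hnb b); left; auto.
      intros x Sx. rewrite <- (Hf x Sx) at 1. auto.
    + apply (stong_down S l); auto. intros b Hb; apply (Hnb b); right; auto.
      intros x Sx. rewrite <- (Hf x Sx) at 2. auto.
Qed.

Lemma FC_min S l a b : (forall x, S x -> In x l) -> (forall b, ~ beat S b) ->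
  S a -> S b -> a <> b -> ~ FC S.
Proof.
  intros Hl Hnb Sa Sb Hab [c [Sc F]].
  pose proof (fence_id S l _ _ Hl Hnb F (fun x _ => eq_refl)) as E.
  apply Hab. rewrite <- (E a Sa), <- (E b Sb). reflexivity.
Qed.

Lemma family_fence S l (K : T -> R -> T) : (forall x, S x -> In x l) ->
  fgood le le S K -> (forall y r, S y -> S (K y r)) ->
  fence S (fun y => K y 0) (fun y => K y 1).
Proof.
  intros Hl [P M] HS.
  assert (Unif : forall t, 0 <= t <= 1 -> exists e, 0 < e /\ forall t', 0 <= t' <= 1 ->
     Rabs (t' - t) < e -> forall y, S y -> le (K y t') (K y t)).
  { intros t Ht.
    assert (A1 : forall a e e', (fun y e => S y -> forall t', 0 <= t' <= 1 -> Rabs (t' - t) < e ->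
        le (K y t') (K y t)) a e -> 0 < e' <= e -> (fun y e => S y -> forall t', 0 <= t' <= 1 -> Rabs (t' - t) < e ->
        le (K y t') (K y t)) a e').
    { intros a e e' Hq [He' Hee] Sa t' Ht' Ha. apply Hq; auto. lra. }
    assert (A2 : forall a, In a l -> exists e, 0 < e /\ (fun y e => S y -> forall t', 0 <= t' <= 1 -> Rabs (t' - t) < e ->
        le (K y t') (K y t)) a e).
    { intros a _. destruct (classic (S a)) as [Sa|Sa].
      + destruct (P a Sa t Ht) as [e [He Hq]]. exists e. split; auto.
      + exists 1. split. lra. intros; contradiction. }
    destruct (list_min _ l A1 A2) as [e [He Hq]].
    exists e. split; [exact He|]. intros t' Ht' Ha y Sy. apply (Hq y); auto. }
  assert (Mono : forall t, 0 <= t <= 1 -> mono2 S S (fun y => K y t)).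
  { intros t Ht. split; intros; auto. }
  set (Pr := fun r => fence S (fun y => K y 0) (fun y => K y r)).
  set (E := fun r => 0 <= r <= 1 /\ forall s, 0 <= s <= r -> Pr s).
  assert (E0 : E 0).
  { split. lra. intros s Hs. replace s with 0 by lra. apply fence_refl; auto. apply Mono; lra. }
  destruct (completeness E) as [sg [Hub Hlub]].
  { exists 1. intros x [Hx _]. lra. } { exists 0; auto. }
  assert (Hs0 : 0 <= sg) by (apply Hub; auto).
  assert (Hs1 : sg <= 1) by (apply Hlub; intros x [Hx _]; lra).
  destruct (Unif sg (conj Hs0 Hs1)) as [e [He Hl2]].
  assert (Hr : exists r, E r /\ sg - e < r).
  { apply NNPP; intro Hn. assert (sg <= sg - e); [|lra]. apply Hlub. intros x Ex.
    apply Rnot_lt_le. intro; apply Hn; eauto. }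
  destruct Hr as [r [[Hr01 Er] Hr]].
  assert (Hrs : r <= sg) by (apply Hub; split; auto).
  assert (Psg : Pr sg).
  { apply fence_snoc with (fun y => K y r). apply Er; lra. apply Mono; lra.
    left. intros y Sy. apply Hl2; [lra| apply abs_lt_intro; lra | exact Sy]. }
  destruct (Rlt_dec sg 1) as [Hlt|Hge].
  - exfalso. set (r' := Rmin 1 (sg + e/2)).
    assert (r' <= 1) by apply Rmin_l. assert (r' <= sg + e/2) by apply Rmin_r.
    assert (sg < r') by (apply Rmin_glb_lt; lra).
    assert (E r').
    { split. lra. intros s Hs. destruct (Rle_dec s r). apply Er; lra.
      apply fence_snoc with (fun y => K y sg); auto. apply Mono; lra.
      right. intros y Sy. apply Hl2; [lra| apply abs_lt_intro; lra | exact Sy]. }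
    assert (r' <= sg) by (apply Hub; auto). lra.
  - replace 1 with sg by lra. exact Psg.
Qed.

End Fence.
Arguments mono2 {T} le S S' f.
Arguments cmp {T} le S f g.
Arguments fence {T} le S _ _.
Arguments FC {T} le S.
Arguments upbeat {T} le S b.
Arguments downbeat {T} le S b.
Arguments beat {T} le S b.
Arguments rem {T} S b x.

Section Susp.
Variable X : Type.
Variable le : X -> X -> Prop.
Hypothesis lrefl : forall x, le x x.
Hypothesis ltrans : forall x y z, le x y -> le y z -> le x z.
Hypothesis lanti : forall x y, le x y -> le y x -> x = y.

Definition sle := susp_le le.
Lemma srefl : forall y, sle y y.
Proof. intros [a|b]; simpl; auto. Qed.
Lemma strans : forall x y z, sle x y -> sle y z -> sle x z.
Proof. intros [a|b] [a'|b'] [a''|b'']; simpl; intros; subst; eauto; contradiction. Qed.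
Lemma santi : forall x y, sle x y -> sle y x -> x = y.
Proof. intros [a|b] [a'|b']; simpl; intros; subst; try contradiction; auto. f_equal; auto. Qed.

Definition Ssusp (SX : X -> Prop) (y : susp X) : Prop :=
  match y with base a => SX a | pole _ => True end.

Definition lY (l : list X) : list (susp X) := pole true :: pole false :: map base l.
Lemma lY_cover SX l : (forall x, SX x -> In x l) -> forall y, Ssusp SX y -> In y (lY l).
Proof. intros Hl [a|[|]] Hy; simpl in *; auto. right; right. apply in_map; auto. Qed.

Lemma T1 SX b : beat le SX b -> beat sle (Ssusp SX) (base b).
Proof.
  intros [[Sb [m [Sm [Hmb [Hbm Hmin]]]]]|[Sb [m [Sm [Hmb [Hbm Hmax]]]]]].
  - left. split; simpl; auto. exists (base m). simpl. split; auto. split; [congruence|]. split; auto.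
    intros [z|z] Sz Hz Hbz; simpl in *; auto. apply Hmin; auto. congruence.
  - right. split; simpl; auto. exists (base m). simpl. split; auto. split; [congruence|]. split; auto.
    intros [z|z] Sz Hz Hbz; simpl in *; try contradiction. apply Hmax; auto. congruence.
Qed.

Lemma T2 SX b : forall y, rem (Ssusp SX) (base b) y <-> Ssusp (rem SX b) y.
Proof. intros [a|c]; unfold rem; simpl; split. intros [H1 H2]; split; auto; congruence. intros [H1 H2]; split; auto; congruence. tauto. split; auto; congruence. Qed.

Lemma maxbeat SX l m a : (forall x, SX x -> In x l) -> SX m -> (forall z, SX z -> le z m) ->
  SX a -> a <> m -> exists b, beat le SX b.
Proof.
  intros Hl Sm Hm Sa Ham.
  destruct (max_exists le ltrans lanti l (fun z => SX z /\ z <> m)) as [z [[Sz Hzm] Hmax]].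
  { intros x [Sx _]; auto. } { eauto. }
  exists z. left. split; auto. exists m. split; auto. split; auto. split; auto.
  intros w Sw Hwz Hzw. destruct (classic (w = m)) as [->|Hwm]. apply lrefl.
  exfalso. apply Hwz. apply Hmax; auto.
Qed.

Lemma T3 SX l a a' : (forall x, SX x -> In x l) -> (forall b, ~ beat le SX b) ->
  SX a -> SX a' -> a <> a' -> forall y, ~ beat sle (Ssusp SX) y.
Proof.
  intros Hl Hnb Sa Sa' Haa [b|b] [[Sy [m [Sm [Hmy [Hym Hmin]]]]]|[Sy [m [Sm [Hmy [Hym Hmax]]]]]].
  -
    destruct m as [m|c].
    + apply (Hnb b). left. split; auto. exists m. simpl in *. split; auto. split; [congruence|].
      split; auto. intros z Sz Hz Hbz. apply (Hmin (base z)); simpl; auto. congruence.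
    + pose proof (Hmin (pole (negb c)) I ltac:(congruence) I) as H. simpl in H.
      destruct c; discriminate.
  - destruct m as [m|c]; simpl in Hmy; try contradiction.
    apply (Hnb b). right. split; auto. exists m. simpl in *. split; auto. split; [congruence|].
    split; auto. intros z Sz Hz Hbz. apply (Hmax (base z)); simpl; auto. congruence.
  - destruct m as [m|c]; simpl in Hym; try contradiction. subst c. congruence.
  - destruct m as [m|c]; simpl in Hym; [|subst; congruence].
    assert (Hm : forall z, SX z -> le z m).
    { intros z Sz. apply (Hmax (base z)); simpl; auto. congruence. }
    destruct (classic (a = m)) as [->|Ham].
    + destruct (maxbeat SX l m a' Hl Sm Hm Sa' ltac:(congruence)) as [b0 Hb0]. apply (Hnb b0 Hb0).
    + destruct (maxbeat SX l m a Hl Sm Hm Sa Ham) as [b0 Hb0]. apply (Hnb b0 Hb0).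
Qed.

Definition Xdec (x y : X) : {x = y} + {x <> y} := excluded_middle_informative (x = y).

Lemma susp_FC : forall n SX l, (length l <= n)%nat -> (forall x, SX x -> In x l) ->
  (exists x, SX x) -> FC sle (Ssusp SX) -> FC le SX.
Proof.
  induction n as [|n IH]; intros SX l Hlen Hl [x0 Hx0] HFC.
  - destruct l; [destruct (Hl x0 Hx0)|simpl in Hlen; lia].
  - destruct (classic (exists b, beat le SX b)) as [[b Hb]|Hnb].
    + apply (FC_add _ le lrefl ltrans lanti SX b Hb).
      assert (Sb : SX b) by (destruct Hb as [[Sb _]|[Sb _]]; auto).
      apply IH with (l := remove Xdec b l).
      * pose proof (remove_length_lt Xdec l b (Hl b Sb)). lia.
      * intros x [Sx Hxb]. apply in_in_remove; auto.
      * destruct Hb as [[_ [m [Sm [Hmb _]]]]|[_ [m [Sm [Hmb _]]]]]; exists m; split; auto.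
      * eapply FC_ext; [apply T2|].
        apply (FC_remove _ sle srefl strans santi). apply T1; auto. exact HFC.
    + destruct (classic (exists a a', SX a /\ SX a' /\ a <> a')) as [[a [a' [Sa [Sa' Haa]]]]|Hone].
      * exfalso. apply (FC_min _ sle strans santi (Ssusp SX) (lY l) (pole true) (pole false)).
        apply lY_cover; auto.
        apply (T3 SX l a a'); auto. intros b Hb; apply Hnb; eauto.
        simpl; auto. simpl; auto. congruence. exact HFC.
      * exists x0. split; auto. apply fence_refl. split; auto.
        intros x Sx. apply NNPP; intro Hx. apply Hone. exists x, x0. auto.
Qed.

End Susp.

Section Main.
Variable X : Type.
Variable le : X -> X -> Prop.
Hypothesis lrefl : forall x, le x x.
Hypothesis ltrans : forall x y z, le x y -> le y z -> le x z.
Hypothesis lanti : forall x y, le x y -> le y x -> x = y.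
Variable enumX : list X.
Hypothesis Hfin : forall x, In x enumX.
Variable xX : X.

Notation Y := (susp X).
Notation sle := (sle X le).
Notation SY := (Ssusp X (fun _ => True)).

Lemma sre : forall y, sle y y. Proof. apply srefl; auto. Qed.
Lemma str : forall x y z, sle x y -> sle y z -> sle x z. Proof. apply strans; auto. Qed.
Lemma san : forall x y, sle x y -> sle y x -> x = y. Proof. apply santi; auto. Qed.
Lemma SYall : forall y, SY y. Proof. intros [a|b]; simpl; auto. Qed.

Lemma fence_hom f g : fence le (fun _ => True) f g ->
  exists Hf, fgood le le (fun _ => True) Hf /\ forall x, Hf x 0%R = f x /\ Hf x 1%R = g x.
Proof.
  induction 1 as [f g Hm E|f h g Hm C F IH].
  - exists (fun x _ => f x). split; [split|].
    + intros z _ t Ht. exists 1%R. split. lra. intros; apply lrefl.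
    + intros z z' _ _ Hzz t Ht. apply Hm; auto.
    + intros x. split; auto.
  - destruct IH as [H2 [G2 E2]].
    pose proof (fence_l _ _ _ _ _ F) as Hh.
    assert (H1ex : exists H1, fgood le le (fun _ => True) H1 /\ forall x, H1 x 0%R = f x /\ H1 x 1%R = h x).
    { destruct C as [C|C].
      - exists (fun x => pup (f x) (h x)). split.
        + apply fgood_up; auto. intros z z' _ _ Hzz. split; [apply Hm|apply Hh]; auto.
        + intros x. rewrite pup0, pup1. auto.
      - exists (fun x => pdown (f x) (h x)). split.
        + apply fgood_down; auto. intros z z' _ _ Hzz. split; [apply Hm|apply Hh]; auto.
        + intros x. rewrite pdown0, pdown1. auto. }
    destruct H1ex as [H1 [G1 E1]].
    exists (fun x => pcat (H1 x) (H2 x)). split.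
    + apply fgood_cat; auto. intros x _. destruct (E1 x), (E2 x). congruence.
    + intros x. rewrite pcat0, pcat1. destruct (E1 x), (E2 x). auto.
Qed.

Lemma FC_contractible : FC le (fun _ => True) -> contractible (alex_open le).
Proof.
  intros [c [_ F]]. destruct (fence_hom _ _ F) as [Hf [G E]].
  exists c, (fun p => Hf (fst p) (proj1_sig (snd p))). split.
  - apply fam_cont; auto.
  - intros x. simpl. destruct (E x) as [E0 E1]. split; [exact E0|exact E1].
Qed.

Lemma down_open (O : Y * Y -> Prop) :
  (forall p q, sle (fst q) (fst p) -> sle (snd q) (snd p) -> O p -> O q) ->
  prod_open (alex_open sle) (alex_open sle) O.
Proof.
  intros HO p Hp. exists (fun a => sle a (fst p)), (fun b => sle b (snd p)).
  split; [apply alex_down, str|]. split; [apply alex_down, str|].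
  split; [apply sre|]. split; [apply sre|]. intros a b Ha Hb. apply (HO p); auto.
Qed.

Lemma open_down (O : Y * Y -> Prop) : prod_open (alex_open sle) (alex_open sle) O ->
  forall p q p' q', O (p, q) -> sle p' p -> sle q' q -> O (p', q').
Proof.
  intros HO p q p' q' Hpq H1 H2. destruct (HO _ Hpq) as [U [V [HU [HV [Hu [Hv Hb]]]]]].
  apply Hb. exact (HU _ _ Hu H1). exact (HV _ _ Hv H2).
Qed.

Definition UPQ (P Q : bool) (p : Y * Y) := sle (fst p) (pole P) /\ sle (snd p) (pole Q).

Lemma UPQ_section P Q : has_section (alex_open sle) (UPQ P Q).
Proof.
  apply (sec_of_family _ sle sre str _
    (fun p => pcat (pcat (pup (fst p) (pole P)) (pdown (pole P) (base xX)))
                   (pcat (pup (base xX) (pole Q)) (pdown (pole Q) (snd p))))).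
  - apply (fgood_cat _ _ sre).
    + apply (fgood_cat _ _ sre).
      * apply (fgood_up _ _ sre). intros z [Hz _]; auto.
        intros z z' _ _ [H1 H2]. split; auto. apply sre.
      * apply (fgood_down _ _ sre). intros; simpl; auto.
        intros; split; apply sre.
      * intros z _. rewrite pup1, pdown0. auto.
    + apply (fgood_cat _ _ sre).
      * apply (fgood_up _ _ sre). intros; simpl; auto.
        intros; split; apply sre.
      * apply (fgood_down _ _ sre). intros z [_ Hz]; auto.
        intros z z' _ _ [H1 H2]. split; auto. apply sre.
      * intros z _. rewrite pup1, pdown0. auto.
    + intros z _. rewrite pcat1, pdown1, pcat0, pup0. auto.
  - intros p _. rewrite pcat0, pcat0, pup0, pcat1, pcat1, pdown1. auto.
Qed.

Definition side (y : Y) : bool := match y with pole b => b | base _ => true end.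
Lemma side_le y : sle y (pole (side y)). Proof. destruct y; simpl; auto. Qed.

Lemma cover4 : TC_cover (alex_open sle) 4.
Proof.
  exists (fun i => match i with 0 => UPQ true true | 1 => UPQ true false
                           | 2 => UPQ false true | _ => UPQ false false end)%nat.
  split.
  - intros i Hi. assert (forall P Q, prod_open (alex_open sle) (alex_open sle) (UPQ P Q) /\
        has_section (alex_open sle) (UPQ P Q)).
    { intros P Q. split. apply down_open. intros p q H1 H2 [H3 H4]. split; eapply str; eauto.
      apply UPQ_section. }
    destruct i as [|[|[|i]]]; auto.
  - intros [y1 y2]. pose proof (side_le y1). pose proof (side_le y2).
    destruct (side y1), (side y2).
    + exists 0%nat. split. lia. split; auto.
    + exists 1%nat. split. lia. split; auto.
    + exists 2%nat. split. lia. split; auto.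
    + exists 3%nat. split. lia. split; auto.
Qed.

Section Contr.
Variable c : X.
Variable H : X * unitI -> X.
Hypothesis Hc : continuous (prod_open (alex_open le) I_open) (alex_open le) H.
Hypothesis HE : forall x, H (x, I0) = x /\ H (x, I1) = c.

Definition Apath (y : Y) : R -> Y :=
  match y with base a => fun r => base (H (a, clamp r)) | pole b => fun _ => pole b end.
Definition alpha (y : Y) : Y := match y with base _ => base c | pole b => pole b end.

Lemma Apath_good : fgood sle sle (fun _ => True) Apath.
Proof.
  destruct (contr_family _ le lrefl ltrans H Hc) as [P M]. split.
  - intros [a|b] _ t Ht; simpl.
    + destruct (P a I t Ht) as [e [He Hl]]. exists e. split; auto.
    + exists 1%R. split. lra. intros; simpl; auto.
  - intros [a|b] [a'|b'] _ _ Hzz t Ht; simpl in *; auto.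
Qed.

Lemma Apath0 y : Apath y 0%R = y.
Proof. destruct y; simpl; auto. rewrite clamp0, (proj1 (HE x)). auto. Qed.
Lemma Apath1 y : Apath y 1%R = alpha y.
Proof. destruct y; simpl; auto. rewrite clamp1, (proj2 (HE x)). auto. Qed.

Lemma global_section : has_section (alex_open sle) (fun _ => True).
Proof.
  apply (sec_of_family _ sle sre str _
    (fun p => pcat (Apath (fst p))
       (pcat (pcat (pdown (alpha (fst p)) (base c)) (pup (base c) (alpha (snd p))))
             (prev (Apath (snd p)))))).
  - apply (fgood_cat _ _ sre).
    + apply (fgood_comp _ sle sle (leP _ sle) (fun _ => True) (fun _ => True) Apath fst Apath_good); auto.
      intros z z' _ _ [H1 _]; auto.
    + apply (fgood_cat _ _ sre).
      * apply (fgood_cat _ _ sre).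
        -- apply (fgood_down _ _ sre). intros [[a|b] y] _; simpl; auto.
           intros [[a|b] y] [[a'|b'] y'] _ _ [H1 _]; simpl in *; split; auto; try contradiction.
        -- apply (fgood_up _ _ sre). intros [y [a|b]] _; simpl; auto.
           intros [y [a|b]] [y' [a'|b']] _ _ [_ H1]; simpl in *; split; auto; try contradiction.
        -- intros z _. rewrite pdown1, pup0. auto.
      * apply fgood_rev.
        apply (fgood_comp _ sle sle (leP _ sle) (fun _ => True) (fun _ => True) Apath snd Apath_good); auto.
        intros z z' _ _ [_ H1]; auto.
      * intros z _. rewrite pcat1, pup1, prev0, Apath1. auto.
    + intros z _. rewrite Apath1, pcat0, pcat0, pdown0. auto.
  - intros p _. rewrite pcat0, Apath0, pcat1, pcat1, prev1, Apath0. auto.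
Qed.
End Contr.

Lemma fence_uv (O : Y * Y -> Prop) (u v : Y -> Y) :
  has_section (alex_open sle) O -> (forall y, O (u y, v y)) ->
  (forall y y', sle y y' -> sle (u y) (u y') /\ sle (v y) (v y')) ->
  fence sle SY u v.
Proof.
  intros Hs HO Huv. destruct (sec_family _ sle sre str O u v Hs HO Huv) as [K [G E]].
  assert (F : fence sle SY (fun y => K y 0%R) (fun y => K y 1%R)).
  { apply (family_fence _ sle sre san SY (lY X enumX)).
    - apply lY_cover; auto.
    - destruct G as [P M]. split; intros; auto.
    - intros; apply SYall. }
  apply (fence_ext _ sle sre san _ _ _ _ _ F); intros y _; apply E.
Qed.

Lemma mono_all (f : Y -> Y) : (forall y y', sle y y' -> sle (f y) (f y')) -> mono2 sle SY SY f.
Proof. intros Hf. split; auto. intros; apply SYall. Qed.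

Lemma caseA O P : has_section (alex_open sle) O -> (forall y, O (pole P, y)) -> FC sle SY.
Proof.
  intros Hs HO. exists (pole P). split. simpl; auto.
  apply (fence_sym _ sle sre san). apply (fence_uv O); auto.
  intros; split; auto. apply sre.
Qed.

Lemma caseB O Q : has_section (alex_open sle) O -> (forall y, O (y, pole Q)) -> FC sle SY.
Proof.
  intros Hs HO. exists (pole Q). split. simpl; auto.
  apply (fence_uv O); auto. intros; split; auto. apply sre.
Qed.

Lemma caseCD O g : has_section (alex_open sle) O -> (forall y, O (y, g y)) ->
  (forall y y', sle y y' -> sle (g y) (g y')) -> (forall y, sle (base xX) (g y)) -> FC sle SY.
Proof.
  intros Hs HO Hg Hb. exists (base xX). split. simpl; auto.
  apply (fence_snoc _ sle sre san SY _ g).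
  - apply (fence_uv O); auto.
  - apply mono_all. intros; apply sre.
  - right. intros; auto.
Qed.

Definition gC (y : Y) : Y := match y with base _ => base xX | pole b => pole b end.
Definition gD (y : Y) : Y := match y with base _ => base xX | pole b => pole (negb b) end.

Lemma lower4 : ~ contractible (alex_open le) -> forall k, TC_cover (alex_open sle) k -> (4 <= k)%nat.
Proof.
  intros Hnc k [Us [Hop Hcov]]. destruct (Nat.lt_ge_cases k 4) as [Hk|]; [|auto]. exfalso.
  apply Hnc. apply FC_contractible.
  apply (susp_FC X le lrefl ltrans lanti (length enumX) (fun _ => True) enumX); auto.
  exists xX; auto.
  destruct (Hcov (pole true, pole true)) as [i1 [Hi1 H1]].
  destruct (Hcov (pole true, pole false)) as [i2 [Hi2 H2]].
  destruct (Hcov (pole false, pole true)) as [i3 [Hi3 H3]].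
  destruct (Hcov (pole false, pole false)) as [i4 [Hi4 H4]].
  assert (Hp : i1 = i2 \/ i1 = i3 \/ i1 = i4 \/ i2 = i3 \/ i2 = i4 \/ i3 = i4) by lia.
  destruct (Hop i1 Hi1) as [O1 S1]. destruct (Hop i2 Hi2) as [O2 S2].
  destruct (Hop i3 Hi3) as [O3 S3].
  destruct Hp as [E|[E|[E|[E|[E|E]]]]]; subst.
  - apply (caseA (Us i2) true S2). intros [a|[|]]; auto.
    eapply open_down; eauto; simpl; auto.
  - apply (caseB (Us i3) true S3). intros [a|[|]]; auto.
    eapply open_down; eauto; simpl; auto.
  - apply (caseCD (Us i4) gC (proj2 (Hop i4 Hi4))).
    + intros [a|[|]]; simpl; auto. eapply open_down; [exact (proj1 (Hop i4 Hi4))|exact H4| |]; simpl; auto.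
    + intros [a|b] [a'|b']; simpl; auto.
    + intros [a|b]; simpl; auto.
  - apply (caseCD (Us i3) gD S3).
    + intros [a|[|]]; simpl; auto. eapply open_down; eauto; simpl; auto.
    + intros [a|b] [a'|b']; simpl; auto. intros; subst; auto.
    + intros [a|b]; simpl; auto.
  - apply (caseB (Us i4) false (proj2 (Hop i4 Hi4))). intros [a|[|]]; auto.
    eapply open_down; [exact (proj1 (Hop i4 Hi4))|exact H4| |]; simpl; auto.
  - apply (caseA (Us i4) false (proj2 (Hop i4 Hi4))). intros [a|[|]]; auto.
    eapply open_down; [exact (proj1 (Hop i4 Hi4))|exact H4| |]; simpl; auto.
Qed.

End Main.

Theorem theorem2 (X : Type) (le : X -> X -> Prop)
  (enumX : list X) (Hfin : forall x, In x enumX)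
  (Hrefl : forall x, le x x)
  (Hanti : forall x y, le x y -> le y x -> x = y)
  (Htrans : forall x y z, le x y -> le y z -> le x z)
  (xX : X) :
  (contractible (alex_open le) -> TC_eq (alex_open (susp_le le)) 1) /\
  (~ contractible (alex_open le) -> TC_eq (alex_open (susp_le le)) 4).
Proof.
  split.
  - intros Hc. split.
    + destruct Hc as [c [H [Hcont HE]]]. exists (fun _ _ => True). split.
      * intros i Hi. split.
        -- apply (down_open X le Hrefl Htrans). auto.
        -- exact (global_section X le Hrefl Htrans c H Hcont HE).
      * intros p. exists 0%nat. split; [lia|exact I].
    + intros k [Us [_ Hcov]]. destruct (Hcov (pole true, pole true)) as [i [Hi _]]. lia.
  - intros Hnc. split.
    + exact (cover4 X le Hrefl Htrans xX).
    + exact (lower4 X le Hrefl Htrans Hanti enumX Hfin xX Hnc).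
Qed.

Print Assumptions theorem2.
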